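(* For a nonnegative integer $n$, let $r_{\mathrm{OPT}}(n)$ be the number of optimal $\{0,1,-1\}$-representations of $n$. Then $r_{\mathrm{OPT}}$ is $2$-quasimultiplicative; specifically, for all nonnegative integers $a,b,k$ with $b<2^k$, $$r_{\mathrm{OPT}}(2^{k+3}a+b)=r_{\mathrm{OPT}}(a)\,r_{\mathrm{OPT}}(b).$$
   Context: A $\{0,1,-1\}$-representation of $n$ is an expression $n=\sum_{i\ge0}d_i2^i$ with $d_i\in\{0,1,-1\}$ and only finitely many $d_i\neq0$. It is optimal if its number of nonzero digits is minimal among all $\{0,1,-1\}$-representations of $n$. A function $f$ is $2$-quasimultiplicative if for some nonnegative integer $r$, $f(2^{k+r}a+b)=f(a)f(b)$ whenever $0\le b<2^k$. *)

(* Defs.v *)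
From HB Require Import structures.
From mathcomp Require Import all_boot all_order all_algebra.
From mathcomp Require Import finmap.
From mathcomp Require Import boolp classical_sets cardinality.
Set Implicit Arguments. Unset Strict Implicit. Unset Printing Implicit Defensive.
Import Order.TTheory GRing.Theory Num.Theory.
Local Open Scope ring_scope.
Local Open Scope classical_set_scope.
Local Open Scope fset_scope.

(* A {0,1,-1}-representation is encoded as its finite digit sequence
   [:: d_0; d_1; ...; d_L] (least significant first), normalized so that the
   last digit is nonzero (the empty sequence represents 0).  This is a
   bijective encoding of finitely supported digit families. *)
Definition digits_ok (s : seq int) : bool :=
  all (fun d => d \in [:: 0; 1; -1]) s.

Definition normalized (s : seq int) : bool := last 1 s != 0.

Definition rep_value (s : seq int) : int :=
  \sum_(i < size s) s`_i * (2%:Z) ^+ i.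

Definition is_rep (n : nat) (s : seq int) : bool :=
  [&& digits_ok s, normalized s & rep_value s == n%:Z].

Definition weight (s : seq int) : nat := count (fun d => d != 0) s.

Definition optimal_rep (n : nat) (s : seq int) : Prop :=
  is_rep n s /\ forall t, is_rep n t -> (weight s <= weight t)%N.

(* r_OPT(n): the number of optimal representations of n (this set is finite;
   fset_set yields the corresponding finite set). *)
Definition optimal_reps (n : nat) : set (seq int) := [set s | optimal_rep n s].

Definition r_opt (n : nat) : nat := #|` fset_set (optimal_reps n) |.

(* Main.v *)
Require Import Defs.
From mathcomp Require Import all_boot.
From HB Require Import structures.
From mathcomp Require Import all_order all_algebra finmap.
From mathcomp Require Import boolp classical_sets cardinality.
From mathcomp Require Import zify.
Set Implicit Arguments. Unset Strict Implicit. Unset Printing Implicit Defensive.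
Import Order.TTheory GRing.Theory Num.Theory.

Section Helpers.
Local Open Scope classical_set_scope.
Local Open Scope ring_scope.

Fixpoint vl (s : seq int) : int := if s is d :: t then d + 2 * vl t else 0.

Lemma rep_valueE s : rep_value s = vl s.
Proof.
elim: s => [|d t IH]; first by rewrite /rep_value big_ord0.
rewrite /rep_value /= big_ord_recl /= expr0 mulr1 -IH /rep_value.
congr (_ + _); rewrite mulr_sumr; apply: eq_bigr => i _.
by rewrite /bump /= exprS mulrCA.
Qed.

Definition ok (s : seq int) := digits_ok s.
Arguments ok : simpl never.
Arguments weight : simpl never.
Arguments normalized : simpl never.

Lemma ok_cons d t : ok (d :: t) = ((d == 0) || (d == 1) || (d == -1)) && ok t.
Proof. by rewrite /ok /digits_ok /= !inE orbA. Qed.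

Lemma ok_cat s t : ok (s ++ t) = ok s && ok t.
Proof. by rewrite /ok /digits_ok all_cat. Qed.

Lemma vl_cat s t : vl (s ++ t) = vl s + 2 ^+ size s * vl t.
Proof.
elim: s => [|d s IH] /=; first by rewrite expr0 mul1r add0r.
by rewrite IH exprS mulrDr addrA mulrA.
Qed.

Lemma weight_cat s t : weight (s ++ t) = (weight s + weight t)%N.
Proof. by rewrite /weight count_cat. Qed.

Lemma digit_cases (d : int) : (d == 0) || (d == 1) || (d == -1) -> d = 0 \/ d = 1 \/ d = -1.
Proof. by case/orP => [/orP[]|] /eqP ->; auto. Qed.

Lemma vl_bound s : ok s -> - 2 ^+ size s < vl s < 2 ^+ size s.
Proof.
elim: s => [|d s IH] /=; first by rewrite expr0.
rewrite ok_cons => /andP[/digit_cases Hd /IH]; rewrite exprS.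
set P := 2 ^+ size s => /andP[H1 H2]; apply/andP; split; case: Hd => [->|[->|->]]; lia.
Qed.


Lemma weight_cons d t : weight (d :: t) = ((d != 0) + weight t)%N.
Proof. by []. Qed.

Definition neg (s : seq int) := map (fun d => - d) s.
Lemma vl_neg s : vl (neg s) = - vl s.
Proof. by elim: s => [|d s IH] //=; rewrite IH; lia. Qed.
Lemma weight_neg s : weight (neg s) = weight s.
Proof. by elim: s => [|d s IH] //=; rewrite !weight_cons IH oppr_eq0. Qed.
Lemma ok_neg s : ok (neg s) = ok s.
Proof.
elim: s => [|d s IH] //=; rewrite !ok_cons IH; congr (_ && _).
by rewrite oppr_eq0 -eqr_oppLR -(eqr_opp (- d)) opprK; case: (d == 0); case: (d == 1); case: (d == -1).
Qed.

Lemma p1 t : ok t -> exists t', [/\ ok t', vl t' = vl t + 1 & (weight t' <= (weight t).+1)%N].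
Proof.
elim: t => [|d t IH].
  by move=> _; exists [:: 1]; rewrite /= ok_cons /ok.
rewrite ok_cons => /andP[/digit_cases Hd Ht].
case: Hd => [->|[->|->]].
- exists (1 :: t); rewrite ok_cons Ht /= !weight_cons ?oner_eq0 ?eqxx /=; split=> //; lia.
- have [t'' [H1 H2 H3]] := IH Ht.
  exists (0 :: t''); rewrite ok_cons H1 /= !weight_cons ?oner_eq0 ?eqxx H2 /=; split=> //; lia.
- exists (0 :: t); rewrite ok_cons Ht /= !weight_cons ?oppr_eq0 ?oner_eq0 ?eqxx /=; split=> //; lia.
Qed.

Lemma m1 t : ok t -> exists t', [/\ ok t', vl t' = vl t - 1 & (weight t' <= (weight t).+1)%N].
Proof.
rewrite -ok_neg => /p1 [t' [H1 H2 H3]].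
exists (neg t'); rewrite ok_neg vl_neg H2 vl_neg weight_neg; split => //; first lia.
by rewrite weight_neg in H3.
Qed.

Fixpoint strip (s : seq int) : seq int :=
  if s is d :: t then (let t' := strip t in if (d == 0) && (t' == [::]) then [::] else d :: t')
  else [::].

Lemma vl_strip s : vl (strip s) = vl s.
Proof.
elim: s => [|d s IH] //=; case: ifP => [/andP[/eqP -> /eqP E]|_] /=; last by rewrite IH.
by rewrite -IH E /=; lia.
Qed.

Lemma weight_strip s : weight (strip s) = weight s.
Proof.
elim: s => [|d s IH] //=; case: ifP => [/andP[/eqP -> /eqP E]|_] /=; last by rewrite !weight_cons IH.
by rewrite weight_cons -IH E.
Qed.

Lemma ok_strip s : ok s -> ok (strip s).
Proof.
elim: s => [|d s IH] //=; rewrite ok_cons => /andP[Hd Hs].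
by case: ifP => // _; rewrite ok_cons Hd IH.
Qed.

Lemma normalized_cons d t : normalized (d :: t) = if t is [::] then d != 0 else normalized t.
Proof. by case: t. Qed.

Lemma normalized_strip s : normalized (strip s).
Proof.
elim: s => [|d s IH] //=; case: ifP => // /negbT.
rewrite normalized_cons; case: (strip s) IH => //= _; by rewrite andbT.
Qed.

Lemma strip_id s : normalized s -> strip s = s.
Proof.
elim: s => [|d s IH] //=; rewrite normalized_cons.
case: s IH => [|e s] IH; first by move=> /= /negbTE ->.
by move=> /IH E; rewrite E andbF.
Qed.

Lemma strip_cat x y : strip (x ++ y) = if strip y == [::] then strip x else x ++ strip y.
Proof.
elim: x => [|d x IH] /=; first by case: eqP.
rewrite IH; case: (strip y =P [::]) => // E2.
have H : x ++ strip y != [::].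
  by rewrite -size_eq0 size_cat addn_eq0 !size_eq0; apply/negP => /andP[_ /eqP].
by rewrite (negbTE H) andbF.
Qed.

Lemma strip_nseq0 n : strip (nseq n 0) = [::].
Proof. by elim: n => //= n ->. Qed.

Lemma strip_pad x : x = strip x ++ nseq (size x - size (strip x)) 0.
Proof.
elim: x => [|d x IH] //=; case: ifP => [/andP[/eqP -> /eqP E]|_] /=.
  by rewrite {1}IH E subn0.
by rewrite subSS -IH.
Qed.

Lemma size_strip s : (size (strip s) <= size s)%N.
Proof. by elim: s => //= d s IH; case: ifP. Qed.

Lemma weight_pos s : normalized s -> s != [::] -> (0 < weight s)%N.
Proof.
elim: s => // d s IH; rewrite normalized_cons weight_cons.
case: s IH => [|e s] IH; first by move=> -> _.
by move=> /IH H _; rewrite (leq_trans (H isT)) // leq_addl.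
Qed.

Definition Rep (n : int) s := ok s && (vl s == n).
Definition Opt (n : int) s :=
  [/\ Rep n s, normalized s & forall t, Rep n t -> (weight s <= weight t)%N].

Lemma optimal_repE (n : nat) s : optimal_rep n s <-> Opt n%:Z s.
Proof.
rewrite /optimal_rep /Opt /is_rep /Rep rep_valueE; split.
  move=> [/and3P[H1 H2 H3] H]; split => //; first by rewrite /ok H1.
  move=> t /andP[Ht1 Ht2]; rewrite -(weight_strip t); apply: H.
  by have := ok_strip Ht1; rewrite /ok => ->; rewrite normalized_strip rep_valueE vl_strip Ht2.
move=> [/andP[H1 H3] H2 H]; split; first by move: H1; rewrite /ok => ->; rewrite H2 H3.
by move=> t /and3P[Ht1 _ Ht2]; apply: H; rewrite /ok Ht1 -rep_valueE.
Qed.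

Lemma exists_opt n t : Rep n t -> exists s, Opt n s.
Proof.
move: t; suff: forall m t, (weight t < m)%N -> Rep n t -> exists s, Opt n s.
  by move=> H t; apply: (H (weight t).+1).
elim=> // m IH t Hm Rt.
case: (pselect (forall t', Rep n t' -> (weight t <= weight t')%N)) => [H|].
  move: Rt => /andP[A /eqP B].
  exists (strip t); split.
  - by rewrite /Rep (ok_strip A) vl_strip B eqxx.
  - exact: normalized_strip.
  - by rewrite weight_strip.
move=> /existsNP [t' /not_implyP [Rt' /negP]]; rewrite -ltnNge => Ht'.
apply: (IH t') => //; exact: leq_trans Ht' _.
Qed.

Lemma rep_nat (n : nat) : exists t, Rep n%:Z t.
Proof.
elim: n => [|n [t /andP[Ht /eqP Hv]]]; first by exists [::].
have [t' [H1 H2 _]] := p1 Ht; exists t'; rewrite /Rep H1 H2 Hv; apply/eqP; lia.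
Qed.


Lemma pow2Z k : (2^k)%N%:Z = 2 ^+ k :> int.
Proof. by rewrite -natz natrX. Qed.

Lemma split_main (k a b : nat) s :
  (b < 2^k)%N -> ok s -> (k + 3 <= size s)%N -> vl s = 2 ^+ (k+3) * a%:Z + b%:Z ->
  (exists tb ta, [/\ Rep b%:Z tb, Rep a%:Z ta & (weight tb + weight ta < weight s)%N])
  \/ [/\ vl (take (k+3) s) = b%:Z, vl (drop (k+3) s) = a%:Z &
         weight s = (weight (take (k+3) s) + weight (drop (k+3) s))%N].
Proof.
move=> Hb Hs HK Hv.
set l := take (k+3) s; set h := drop (k+3) s.
have Es : s = l ++ h by rewrite cat_take_drop.
have Sl : size l = (k+3)%N by rewrite size_takel.
move: Hs Hv; rewrite Es ok_cat vl_cat Sl weight_cat => /andP[okl okh] Hv.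
have := vl_bound okl; rewrite Sl => /andP[Bl1 Bl2].
have Hb' : b%:Z < 2 ^+ k by rewrite -pow2Z; lia.
have [P HP] : {P : int | 2 ^+ k = P} by exists (2 ^+ k).
have E8 : 2 ^+ (k + 3) = P * 8 :> int by rewrite -HP exprD.
move: Bl1 Bl2 Hv Hb'; rewrite E8 HP => Bl1 Bl2 Hv Hb'.
have P0 : 0 < P by rewrite -HP exprn_gt0.
clearbody l h.
have [Hc|Hc] : vl h = a%:Z \/ vl h = a%:Z + 1.
  have E : P * 8 * (a%:Z - vl h) = vl l - b%:Z by rewrite mulrBr; lia.
  have H1 : P * 8 * (a%:Z - vl h) < P * 8 by rewrite E; lia.
  have H2 : - (P * 8) * 2 < P * 8 * (a%:Z - vl h) by rewrite E; lia.
  have H3 : a%:Z - vl h < 1 by rewrite -(ltr_pM2l (_ : 0 < P * 8)) ?mulr1 //; lia.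
  have H4 : - 2 < a%:Z - vl h by rewrite -(ltr_pM2l (_ : 0 < P * 8)) //; lia.
  lia.
  by right; split => //; lia.
left.
rewrite Hc mulrDr mulr1 in Hv.
have okl' := okl; rewrite -(cat_take_drop k l) ok_cat in okl'.
move: okl' => /andP[okl1 okl2].
have Sl1 : size (take k l) = k by rewrite size_takel // Sl leq_addr.
have Sl2 : size (drop k l) = 3%N by rewrite size_drop Sl addKn.
have El : l = take k l ++ drop k l by rewrite cat_take_drop.
move: Sl2 okl2; case E2: (drop k l) => [|x [|y [|z [|w r]]]] // _.
rewrite !ok_cons => /and4P[dx dy dz _].
have := vl_bound okl1; rewrite Sl1 HP => /andP[B1 B2].
have Hvl : vl l = vl (take k l) + P * (x + 2 * (y + 2 * (z + 2 * 0))).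
  by rewrite {1}El vl_cat Sl1 E2 HP.
have Hxyz : x + 2 * (y + 2 * (z + 2 * 0)) < -6.
  rewrite -(ltr_pM2l P0).
  have : vl l - vl (take k l) < P * -6 by clear -Hv B1 Hb' P0; lia.
  by rewrite Hvl addrAC subrr add0r.
have [Hx [Hy Hz]] : [/\ x = -1, y = -1 & z = -1].
  move: Hxyz; clear -dx dy dz.
  move: dx dy dz => /digit_cases dx /digit_cases dy /digit_cases dz.
  case: dx => [Ex|[Ex|Ex]]; case: dy => [Ey|[Ey|Ey]]; case: dz => [Ez|[Ez|Ez]];
    subst x y z; try by split.
have [ta [ta1 ta2 ta3]] := m1 okh.
exists (take k l ++ [:: 1]), ta; split.
- rewrite /Rep ok_cat okl1 /= vl_cat Sl1 HP /=; apply/eqP.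
  subst x y z; nia.
- by rewrite /Rep ta1 ta2 Hc; apply/eqP; lia.
- have Wl : weight l = (weight (take k l) + 3)%N by rewrite {1}El weight_cat E2 Hx Hy Hz.
  rewrite weight_cat Wl /=.
  have -> : weight [:: 1] = 1%N by [].
  lia.
Qed.


Lemma normalized_cat x y : normalized (x ++ y) = if y is [::] then normalized x else normalized y.
Proof. by rewrite /normalized last_cat; case: y. Qed.

Lemma vl_nseq0 n : vl (nseq n 0) = 0.
Proof. by elim: n => //= n ->; rewrite mulr0 addr0. Qed.

Lemma weight_nseq0 n : weight (nseq n 0) = 0%N.
Proof. by elim: n. Qed.

Lemma ok_nseq0 n : ok (nseq n 0).
Proof. by elim: n => // n IH; rewrite /= ok_cons eqxx. Qed.

Lemma size_bound (k b : nat) s : (b < 2^k)%N -> Opt b%:Z s -> (size s <= k + 3)%N.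
Proof.
move=> Hb [/andP[Hs /eqP Hv] Hn Ho]; rewrite leqNgt; apply/negP => Hsz.
have Hv' : vl s = 2 ^+ (k + 3) * (0%N)%:Z + b%:Z by rewrite Hv mulr0 add0r.
have [[tb [ta [Rb _ W]]]|[H1 H2 H3]] := @split_main k 0 b s Hb Hs (ltnW Hsz) Hv'.
  by have := Ho _ Rb; rewrite leqNgt (leq_ltn_trans (leq_addr _ _) W).
have Hd : drop (k + 3) s != [::] by rewrite -size_eq0 size_drop subn_eq0 -ltnNge.
have Hnd : normalized (drop (k + 3) s).
  by move: Hn; rewrite -{1}(cat_take_drop (k + 3) s) normalized_cat; case: (drop _ _) Hd.
have Wp := weight_pos Hnd Hd.
have Rt : Rep b (take (k + 3) s).
  by rewrite /Rep H1 eqxx andbT; move: Hs; rewrite -{1}(cat_take_drop (k + 3) s) ok_cat => /andP[].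
by have := Ho _ Rt; rewrite H3 -{2}(addn0 (weight _)) leq_add2l leqNgt Wp.
Qed.

Lemma ok_take n s : ok s -> ok (take n s).
Proof. by rewrite -{1}(cat_take_drop n s) ok_cat => /andP[]. Qed.
Lemma ok_drop n s : ok s -> ok (drop n s).
Proof. by rewrite -{1}(cat_take_drop n s) ok_cat => /andP[]. Qed.

Definition combine k (tb ta : seq int) :=
  if ta is [::] then tb else tb ++ nseq (k + 3 - size tb) 0 ++ ta.

Lemma combine_rep k (a b : nat) tb ta : (size tb <= k + 3)%N -> Rep b%:Z tb -> Rep a%:Z ta ->
  Rep (2 ^+ (k + 3) * a%:Z + b%:Z) (combine k tb ta) /\
  weight (combine k tb ta) = (weight tb + weight ta)%N.
Proof.
move=> Hs /andP[ob /eqP vb] /andP[oa /eqP va]; rewrite /combine.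
case: ta oa va => [|d ta] oa va.
  by rewrite /Rep ob vb -va /= mulr0 add0r eqxx addn0.
set ta' := d :: ta in oa va *.
rewrite /Rep !ok_cat ob oa ok_nseq0 !vl_cat vl_nseq0 add0r size_nseq !weight_cat weight_nseq0.
split => //; rewrite mulrA -exprD subnKC // vb va addrC eqxx //.
Qed.

Lemma exists_opt_nat (n : nat) : exists s, Opt n%:Z s.
Proof. by have [t Ht] := rep_nat n; exact: exists_opt Ht. Qed.

Lemma main_char (k a b : nat) s : (b < 2^k)%N ->
  Opt (2 ^+ (k + 3) * a%:Z + b%:Z) s <->
  exists tb ta, [/\ Opt b%:Z tb, Opt a%:Z ta & s = combine k tb ta].
Proof.
move=> Hb; split.
- move=> [/andP[Hs /eqP Hv] Hn Ho].
  have [tb0 Otb0] := exists_opt_nat b; have [ta0 Ota0] := exists_opt_nat a.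
  have Sb0 := size_bound Hb Otb0.
  case: (Otb0) => [Rb0 _ Ob0]; case: (Ota0) => [Ra0 _ Oa0].
  have [Rc Wc] := combine_rep Sb0 Rb0 Ra0.
  have Wle := Ho _ Rc; rewrite Wc in Wle.
  set s' := s ++ nseq (k + 3) 0.
  have os' : ok s' by rewrite ok_cat Hs ok_nseq0.
  have Ss' : (k + 3 <= size s')%N by rewrite size_cat size_nseq leq_addl.
  have vs' : vl s' = 2 ^+ (k + 3) * a%:Z + b%:Z by rewrite vl_cat vl_nseq0 mulr0 addr0.
  have ws' : weight s' = weight s by rewrite weight_cat weight_nseq0 addn0.
  have [[tb [ta [Rb Ra W]]]|[H1 H2 H3]] := split_main Hb os' Ss' vs'.
    have := leq_add (Ob0 _ Rb) (Oa0 _ Ra); rewrite ws' in W; lia.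
  set low := take (k + 3) s' in H1 H3 *; set high := drop (k + 3) s' in H2 H3 *.
  have okl : ok low by move: os'; rewrite -(cat_take_drop (k + 3) s') ok_cat => /andP[].
  have okh : ok high by move: os'; rewrite -(cat_take_drop (k + 3) s') ok_cat => /andP[].
  have Rl : Rep b low by rewrite /Rep okl H1 eqxx.
  have Rh : Rep a high by rewrite /Rep okh H2 eqxx.
  have Wl := Ob0 _ Rl; have Wh := Oa0 _ Rh.
  rewrite -ws' H3 in Wle.
  have El : weight low = weight tb0 by apply/eqP; rewrite eqn_leq Wl andbT; lia.
  have Eh : weight high = weight ta0 by apply/eqP; rewrite eqn_leq Wh andbT; lia.
  exists (strip low), (strip high); split.
  + split; [by rewrite /Rep ok_strip // vl_strip H1 eqxx | exact: normalized_strip |].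
    by move=> t Rt; rewrite weight_strip El; apply: Ob0.
  + split; [by rewrite /Rep ok_strip // vl_strip H2 eqxx | exact: normalized_strip |].
    by move=> t Rt; rewrite weight_strip Eh; apply: Oa0.
  + have -> : s = strip s' by rewrite /s' strip_cat strip_nseq0 eqxx strip_id.
    rewrite -(cat_take_drop (k + 3) s') -/low -/high strip_cat /combine.
    case: (strip high) => [|d r] //=.
    have Sl : size low = (k + 3)%N by rewrite size_takel.
    by rewrite {1}(strip_pad low) Sl -catA.
- move=> [tb [ta [Otb Ota ->]]].
  have Sb := size_bound Hb Otb.
  case: Otb => [Rb Nb Ob]; case: Ota => [Ra Na Oa].
  have [Rc Wc] := combine_rep Sb Rb Ra.
  split => //.
    rewrite /combine; case: ta Na {Ra Oa Rc Wc} => [|d ta] Na //.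
    by rewrite catA normalized_cat.
  move=> t /andP[Ht /eqP Hv]; rewrite Wc.
  set t' := t ++ nseq (k + 3) 0.
  have ot' : ok t' by rewrite ok_cat Ht ok_nseq0.
  have St' : (k + 3 <= size t')%N by rewrite size_cat size_nseq leq_addl.
  have vt' : vl t' = 2 ^+ (k + 3) * a%:Z + b%:Z by rewrite vl_cat vl_nseq0 mulr0 addr0.
  have wt' : weight t' = weight t by rewrite weight_cat weight_nseq0 addn0.
  have [[tb' [ta' [Rb' Ra' W]]]|[H1 H2 H3]] := split_main Hb ot' St' vt'.
    rewrite -wt'; apply: ltnW; exact: leq_ltn_trans (leq_add (Ob _ Rb') (Oa _ Ra')) W.
  rewrite -wt' H3; apply: leq_add.
  + apply: Ob; rewrite /Rep H1 eqxx andbT.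
    exact: ok_take.
  + apply: Oa; rewrite /Rep H2 eqxx andbT.
    exact: ok_drop.
Qed.


Fixpoint ds m : seq (seq int) :=
  if m is m'.+1 then [::] :: [seq d :: t | d <- [:: 0; 1; -1], t <- ds m'] else [:: [::]].

Lemma ds_S m : ds m.+1 = [::] :: [seq d :: t | d <- [:: 0; 1; -1], t <- ds m].
Proof. by []. Qed.

Lemma mem_ds m s : ok s -> (size s <= m)%N -> s \in ds m.
Proof.
elim: m s => [|m IH] [|d s] //; try by rewrite ?ds_S inE eqxx.
rewrite ok_cons ds_S => /andP[Hd Hs] Hsz; rewrite inE; apply/orP; right.
apply/allpairsP; exists (d, s); split => //=; last exact: IH.
by rewrite !inE orbA.
Qed.

Lemma opt_list (n : nat) : exists L : seq (seq int), uniq L /\ forall s, Opt n%:Z s <-> s \in L.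
Proof.
have sub : [set s | Opt n%:Z s] `<=` [set` ds (n + 3)].
  move=> s Os; apply: mem_ds; first by case: Os => /andP[].
  by apply: (size_bound _ Os); apply: ltn_expl.
have /finite_seqP [s0 E] := sub_finite_set sub (finite_seq _).
exists (undup s0); split; first exact: undup_uniq.
move=> s; rewrite mem_undup; move/seteqP: E => [E1 E2]; split; [exact: E1 | exact: E2].
Qed.

Lemma r_opt_size (n : nat) L : uniq L -> (forall s, Opt n%:Z s <-> s \in L) -> r_opt n = size L.
Proof.
move=> uL HL; rewrite /r_opt.
have E : optimal_reps n = [set` L].
  apply/seteqP; split => s /=; rewrite /optimal_reps /=.
    by move=> H; apply/HL; apply/optimal_repE.
  by move=> H; apply/optimal_repE; apply/HL.
rewrite E; have Hm := in_fset_set (finite_seq L).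
apply: perm_size; apply: uniq_perm; [exact: fset_uniq | exact: uL | ] => x.
rewrite Hm; apply/idP/idP; rewrite in_setE //.
Qed.

Lemma combine_inj k (b : nat) tb tb' ta ta' : (b < 2^k)%N -> Opt b%:Z tb -> Opt b%:Z tb' ->
  combine k tb ta = combine k tb' ta' -> tb = tb' /\ ta = ta'.
Proof.
move=> Hb Ob Ob'; have Sb := size_bound Hb Ob; have Sb' := size_bound Hb Ob'.
case: Ob => [_ Nb _]; case: Ob' => [_ Nb' _].
rewrite /combine; case: ta => [|d r]; case: ta' => [|d' r'] //.
- move=> E; have := congr1 size E; rewrite !size_cat !size_nseq /=; lia.
- move=> E; have := congr1 size E; rewrite !size_cat !size_nseq /=; lia.
- rewrite !catA => /eqP; rewrite eqseq_cat; last by rewrite !size_cat !size_nseq !subnKC.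
  move=> /andP[/eqP E1 /eqP ->]; split => //.
  by move: (congr1 strip E1); rewrite !strip_cat !strip_nseq0 eqxx !strip_id.
Qed.

End Helpers.

Theorem lemma2 (a b k : nat) :
  (b < 2 ^ k)%N ->
  r_opt (2 ^ (k + 3) * a + b) = (r_opt a * r_opt b)%N.
Proof.
move=> Hb.
have [La [uA HA]] := opt_list a.
have [Lb [uB HB]] := opt_list b.
rewrite (r_opt_size uA HA) (r_opt_size uB HB).
have NZ : Posz (2 ^ (k + 3) * a + b)%N = (Posz 2 ^+ (k + 3) * Posz a + Posz b)%R.
  by rewrite PoszD PoszM pow2Z.
rewrite (@r_opt_size _ [seq combine k tb ta | tb <- Lb, ta <- La]).
- by rewrite size_allpairs mulnC.
- apply: allpairs_uniq => // -[x1 y1] [x2 y2].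
  move=> /allpairsP[[p1 p2] [/= Hp1 Hp2 [-> ->]]] /allpairsP[[q1 q2] [/= Hq1 Hq2 [-> ->]]] /= E.
  by have [-> ->] := combine_inj Hb (proj2 (HB _) Hp1) (proj2 (HB _) Hq1) E.
- move=> s; rewrite NZ main_char //; split.
  + move=> [tb [ta [Otb Ota ->]]]; apply/allpairsP; exists (tb, ta); split => //.
    * exact/HB.
    * exact/HA.
  + move=> /allpairsP [[tb ta] [/= H1 H2 ->]]; exists tb, ta; split => //.
    * exact/HB.
    * exact/HA.
Qed.
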